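(* Let $X,Y,\hat X,\hat Y$ be Banach spaces and let $T\colon X\to Y$ and $\hat T\colon\hat X\to\hat Y$ be bounded linear operators such that $(X,Y,T)\equiv(\hat X,\hat Y,\hat T)$. Then $T$ is surjective if and only if $\hat T$ is surjective.
   Context: A Banach space $X$ is regarded as a many-sorted metric structure with one sort $B_X(r)$ for each nonnegative rational $r$ (the closed ball of radius $r$ about $0$), together with: the inclusion maps $B_X(r)\to B_X(s)$ for $r<s$; vector addition $B_X(r)\times B_X(s)\to B_X(r+s)$; for each $\lambda\in\mathbb{Q}$, multiplication by $\lambda$ as a map $B_X(r)\to B_X(|\lambda|r)$; the normalized norm predicate $\|x\|/r$ on $B_X(r)$; and the metric $d(x,y)=\|x-y\|/(2r)$ on $B_X(r)$. For a bounded operator $T\colon X\to Y$, the structure $(X,Y,T)$ consists of the structures of $X$ and $Y$ on disjoint sorts together with $T$ as the family of maps $B_X(r)\to B_Y(s)$ for $s\ge\|T\|r$. Finitary formulas are built from atomic formulas using the connectives $1-x$, $x/2$, $\min(x+y,1)$ (equivalently $\max(x-y,0)$) and the quantifiers $\inf_x,\sup_x$ over the sorts, with values in $[0,1]$. $M\equiv N$ means $\phi^M=\phi^N$ for every finitary sentence $\phi$ (in the common signature). *)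

(* Defs.v *)
From HB Require Import structures.
From mathcomp Require Import all_boot all_order all_algebra.
From mathcomp Require Import boolp classical_sets reals topology normedtype.
Set Implicit Arguments. Unset Strict Implicit. Unset Printing Implicit Defensive.
Import Order.TTheory GRing.Theory Num.Theory.
Local Open Scope ring_scope.
Local Open Scope classical_set_scope.

(* A sort is (side, r): side false = B_X(r), side true = B_Y(r), r : rat
   (well-formed sentences only use r >= 0, see [fwf]). *)
Definition sort := (bool * rat)%type.

Inductive term : sort -> Type :=
| tvar (s : sort) (n : nat) : term s
| tincl (b : bool) (r s : rat) : term (b, r) -> term (b, s)          (* needs r < s *)
| tadd (b : bool) (r s : rat) : term (b, r) -> term (b, s) -> term (b, r + s)
| tscal (b : bool) (l r : rat) : term (b, r) -> term (b, `|l| * r)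
| tT (r s : rat) : term (false, r) -> term (true, s).

Inductive formula : Type :=
| fnorm (s : sort) : term s -> formula
| fdist (s : sort) : term s -> term s -> formula
| fneg : formula -> formula
| fhalf : formula -> formula
| fplus : formula -> formula -> formula
| finf (b : bool) (r : rat) (n : nat) : formula -> formula
| fsup (b : bool) (r : rat) (n : nat) : formula -> formula.

Fixpoint twf (bound : seq (bool * rat * nat)) (s : sort) (t : term s) : bool :=
  match t with
  | tvar s n => (s.1, s.2, n) \in bound
  | tincl _ r s t => (r < s) && twf bound t
  | tadd _ _ _ t1 t2 => twf bound t1 && twf bound t2
  | tscal _ _ _ t => twf bound t
  | tT _ _ t => twf bound t
  end.

Fixpoint fwf (bound : seq (bool * rat * nat)) (phi : formula) : bool :=
  match phi with
  | fnorm _ t => twf bound t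
  | fdist _ t1 t2 => twf bound t1 && twf bound t2
  | fneg p => fwf bound p
  | fhalf p => fwf bound p
  | fplus p q => fwf bound p && fwf bound q
  | finf b r n p => (0 <= r) && fwf ((b, r, n) :: bound) p
  | fsup b r n p => (0 <= r) && fwf ((b, r, n) :: bound) p
  end.

Definition sentence (phi : formula) : bool := fwf [::] phi.

Section Semantics.
Variables (R : realType) (X Y : normedModType R) (T : X -> Y).

Definition carrier (b : bool) : normedModType R := if b then Y else X.

(* The T-symbol B_X(r) -> B_Y(s) belongs to the signature of (X,Y,T)
   iff T maps B_X(r) into B_Y(s), i.e. s >= ||T|| r. *)
Definition Tsym_ok (r s : rat) : Prop :=
  forall x : X, `|x| <= ratr r -> `|T x| <= ratr s.

Fixpoint tadm (s : sort) (t : term s) : Prop :=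
  match t with
  | tvar _ _ => True
  | tincl _ _ _ t => tadm t
  | tadd _ _ _ t1 t2 => tadm t1 /\ tadm t2
  | tscal _ _ _ t => tadm t
  | tT r s t => Tsym_ok r s /\ tadm t
  end.

Fixpoint fadm (phi : formula) : Prop :=
  match phi with
  | fnorm _ t => tadm t
  | fdist _ t1 t2 => tadm t1 /\ tadm t2
  | fneg p => fadm p
  | fhalf p => fadm p
  | fplus p q => fadm p /\ fadm q
  | finf _ _ _ p => fadm p
  | fsup _ _ _ p => fadm p
  end.

Definition venv (eX : rat -> nat -> X) (eY : rat -> nat -> Y) (s : sort) (n : nat)
  : carrier s.1 :=
  match s as s0 return carrier s0.1 with
  | (b, r) => match b as b0 return carrier b0 with
              | true => eY r n
              | false => eX r n
              end
  end.

Fixpoint teval (eX : rat -> nat -> X) (eY : rat -> nat -> Y) (s : sort) (t : term s)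
  : carrier s.1 :=
  match t in term s0 return carrier s0.1 with
  | tvar s n => venv eX eY s n
  | tincl _ _ _ t => teval eX eY t
  | tadd _ _ _ t1 t2 => teval eX eY t1 + teval eX eY t2
  | tscal _ l _ t => ratr l *: teval eX eY t
  | tT _ _ t => T (teval eX eY t)
  end.

Definition upd (V : Type) (e : rat -> nat -> V) (r : rat) (n : nat) (v : V) :=
  fun r' n' => if (r' == r) && (n' == n) then v else e r' n'.

Definition ball_of (V : normedModType R) (r : rat) : set V :=
  [set v : V | `|v| <= ratr r].

Arguments ball_of : clear implicits.

Fixpoint feval (eX : rat -> nat -> X) (eY : rat -> nat -> Y) (phi : formula) : R :=
  match phi with
  | fnorm s t => `|teval eX eY t| / ratr s.2
  | fdist s t1 t2 => `|teval eX eY t1 - teval eX eY t2| / (2 * ratr s.2)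
  | fneg p => 1 - feval eX eY p
  | fhalf p => feval eX eY p / 2
  | fplus p q => Num.min (feval eX eY p + feval eX eY q) 1
  | finf b r n p =>
      if b then inf [set feval eX (upd eY r n y) p | y in ball_of Y r]
      else inf [set feval (upd eX r n x) eY p | x in ball_of X r]
  | fsup b r n p =>
      if b then sup [set feval eX (upd eY r n y) p | y in ball_of Y r]
      else sup [set feval (upd eX r n x) eY p | x in ball_of X r]
  end.

(* Value of a sentence (the environment is irrelevant for sentences). *)
Definition sval (phi : formula) : R := feval (fun _ _ => 0) (fun _ _ => 0) phi.

End Semantics.

Definition elem_equiv (R : realType) (X Y Xh Yh : normedModType R)
  (T : X -> Y) (Th : Xh -> Yh) : Prop :=
  forall phi : formula, sentence phi -> fadm T phi -> fadm Th phi ->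
    sval T phi = sval Th phi.

(* Main.v *)
Require Import Defs.
From HB Require Import structures.
From mathcomp Require Import all_boot all_order all_algebra.
From mathcomp Require Import boolp classical_sets reals topology normedtype sequences.
Import Order.TTheory GRing.Theory Num.Theory.
Local Open Scope ring_scope.
Local Open Scope classical_set_scope.
Definition phiS (c s : rat) : formula :=
  fsup true 1 0 (finf false c 0
    (@fdist (true, s) (@tT c s (@tvar (false, c) 0)) (@tincl true 1 s (@tvar (true, 1) 0)))).

Lemma phiS_sentence c s : 0 <= c -> 1 < s -> sentence (phiS c s).
Proof. by move=> c0 s1; rewrite /sentence /= c0 s1 /= !inE !eqxx ?orbT. Qed.

Lemma phiS_adm (R : realType) (X Y : normedModType R) (T : X -> Y) (c s : rat) :
  Tsym_ok T c s -> fadm T (phiS c s).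
Proof. by move=> h; rewrite /=. Qed.

Lemma phiS_val (R : realType) (X Y : normedModType R) (T : X -> Y) (c s : rat) :
  Defs.sval T (phiS c s) = sup [set inf [set `|T x - y| / (2 * ratr s) | x in ball_of c]
     | y in ball_of 1].
Proof.
rewrite /Defs.sval /=; congr sup; apply: eq_imagel => y _; congr inf.
by apply: eq_imagel => x _ /=; rewrite /upd !eqxx.
Qed.
Lemma supinf0 (R : realType) (U V : Type) (A : set U) (B : set V)
  (F : U -> V -> R) (a0 : U) (b0 : V) (M : R) :
  A a0 -> B b0 -> (forall x y, 0 <= F x y) -> (forall y, B y -> F a0 y <= M) ->
  (sup [set inf [set F x y | x in A] | y in B] = 0 <->
   forall y, B y -> forall e, 0 < e -> exists2 x, A x & F x y < e).
Proof.
move=> Aa0 Bb0 F0 FM.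
have lbA y : has_lbound [set F x y | x in A].
  by exists 0 => _ [x _ <-]; exact: F0.
have neA y : [set F x y | x in A] !=set0 by exists (F a0 y), a0.
have infge y : 0 <= inf [set F x y | x in A].
  by apply: lb_le_inf => // _ [x _ <-]; exact: F0.
split.
- move=> h y By e e0.
  have ub : has_ubound [set inf [set F x y | x in A] | y in B].
    exists M => _ [y' By' <-].
    apply: le_trans (FM y' By'); exact: (ge_inf (lbA y')) (ex_intro2 _ _ a0 Aa0 erefl).
  have : inf [set F x y | x in A] <= 0.
    by rewrite -h; apply: (ub_le_sup ub); exists y.
  move=> le0; have /(inf_lt (neA y)) [_ [x Ax <-] Fe] : inf [set F x y | x in A] < e.
    exact: le_lt_trans le0 e0.
  by exists x.
- move=> h.
  suff -> : [set inf [set F x y | x in A] | y in B] = [set 0] by rewrite sup1.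
  apply/seteqP; split => [_ [y By <-]|_ ->]; last first.
    exists b0 => //; apply/eqP; rewrite eq_le infge andbT.
    apply/ler_addgt0Pr => e e0; rewrite add0r; have [x Ax Fx] := h b0 Bb0 e e0.
    by apply: le_trans (ltW Fx); exact: (ge_inf (lbA b0)) (ex_intro2 _ _ x Ax erefl).
  rewrite /=; apply/eqP; rewrite eq_le infge andbT.
  apply/ler_addgt0Pr => e e0; rewrite add0r; have [x Ax Fx] := h y By e e0.
  by apply: le_trans (ltW Fx); exact: (ge_inf (lbA y)) (ex_intro2 _ _ x Ax erefl).
Qed.

Definition AO (R : realType) (X Y : normedModType R) (T : X -> Y) (c : R) :=
  forall y : Y, `|y| <= 1 -> forall e, 0 < e -> exists2 x : X, `|x| <= c & `|T x - y| < e.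
Arguments AO {R X Y}.

Lemma AO_homog (R : realType) (X Y : normedModType R) (T : {linear X -> Y}) (c : R) :
  AO T c -> forall y : Y, exists x : X, `|x| <= c * `|y| /\ `|T x - y| <= `|y| / 2.
Proof.
move=> H y; have [->|y0] := eqVneq y 0.
  by exists 0; rewrite linear0 subr0 !normr0 mulr0 mul0r.
have ny0 : 0 < `|y| by rewrite normr_gt0.
have [x xc Tx] : exists2 x : X, `|x| <= c & `|T x - `|y|^-1 *: y| < 2^-1.
  apply: H; last by rewrite invr_gt0.
  by rewrite normrZ normfV normr_id mulVf ?gt_eqF.
exists (`|y| *: x); split.
  by rewrite normrZ normr_id mulrC ler_wpM2r.
rewrite linearZ /= -{2}(scalerKV (lt0r_neq0 ny0) y) -scalerBr normrZ normr_id.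
by rewrite ler_wpM2l // ltW.
Qed.

Lemma AO_surj (R : realType) (X : completeNormedModType R) (Y : normedModType R)
  (T : {linear X -> Y}) (c : R) : continuous T -> 0 <= c -> AO T c ->
  forall y : Y, exists x : X, T x = y.
Proof.
move=> Tc c0 /AO_homog /choice [g Hg] y.
pose fix r n := if n is m.+1 then r m - T (g (r m)) else y.
pose u n := g (r n).
have rb n : `|r n| <= `|y| * (2^-1) ^+ n.
  elim: n => [|n IH]; first by rewrite expr0 mulr1.
  rewrite /= -opprB normrN (le_trans (proj2 (Hg (r n)))) //.
  by rewrite exprSr mulrA ler_wpM2r // invr_ge0.
have ub n : `|u n| <= c * `|y| * (2^-1) ^+ n.
  rewrite (le_trans (proj1 (Hg (r n)))) // -mulrA ler_wpM2l //.
have Ts n : T (series u n) = y - r n.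
  elim: n => [|n IH].
    by rewrite /series /= big_geq // linear0 subrr.
  by rewrite seriesSr linearD IH /= opprB [RHS]addrCA [LHS]addrC.
have h2 : 0 <= 2^-1 :> R by rewrite invr_ge0.
have h2n : `|2^-1 : R| < 1 by rewrite ger0_norm // invf_lt1 // ltr1n.
have cv : cvgn (series u).
  apply: normed_cvg.
  have := is_cvg_geometric_series (a := c * `|y|) h2n.
  apply: series_le_cvg => n //=.
  by rewrite /geometric /= mulr_ge0 // ?mulr_ge0 // exprn_ge0.
have hT : (fun n => T (series u n)) @ \oo --> T (limn (series u)).
  by apply: continuous_cvg => //; exact: Tc.
have hy : (fun n => T (series u n)) @ \oo --> y.
  apply/cvgrPdist_lt => e e0.
  have G : geometric `|y| (2^-1:R) @ \oo --> (0:R^o) := @sequences.cvg_geometric _ `|y| _ h2n.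
  have := proj1 (@cvgr0Pnorm_lt R R^o nat \oo eventually_filter (geometric `|y| 2^-1)) G e e0.
  apply: filterS => n.
  rewrite Ts opprB addrCA subrr addr0 /geometric /=.
  by apply: le_lt_trans; rewrite (le_trans (rb n)) // ler_norm.
by exists (limn (series u)); exact: (cvg_unique _ hT hy).
Qed.

Lemma zmod_id (V : zmodType) (a b c z : V) : a - b - z = a - (c + z) - (b - c).
Proof. by rewrite opprB opprD (addrC c) addrACA [- c - z + _]addrAC addNr add0r. Qed.

Lemma closure_approx (R : realType) (Y : normedModType R) (A : set Y) (y : Y) e :
  closure A y -> 0 < e -> exists2 a, A a & `|a - y| < e.
Proof.
move=> cy e0; have [a [Aa]] := cy _ (nbhsx_ballx y e e0).
by rewrite -ball_normE /= distrC => ?; exists a.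
Qed.

Arguments closure_approx {R Y A y e}.

Lemma surj_AO (R : realType) (X Y : completeNormedModType R) (T : {linear X -> Y}) :
  (forall y : Y, exists x : X, T x = y) -> exists2 c : R, 0 <= c & AO T c.
Proof.
move=> Ts.
pose B (n : nat) := closure (T @` [set x : X | `|x| <= n%:R]).
pose F n := ~` B n.
have : ~ forall n, dense (F n).
  move=> dF.
  have /(_ setT) := @Baire R Y F (fun i => conj (closed_openC (@topology_structure.closed_closure _ _)) (dF i)).
  case; [by exists 0 | exact: openT | ].
  move=> z [_ Fz].
  have [x Tx] := Ts z.
  have := Fz (Num.truncn `|x|).+1 Logic.I; rewrite /F /=; apply.
  apply: subset_closure; exists x => //=.
  exact/ltW/truncnS_gt.
move=> /existsNP [n /existsNP [O /not_implyP [[y1 Oy1] /not_implyP [oO nFO]]]].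
have /open_nbhs_nbhs/nbhs_ballP [d d0 bO] : open_nbhs y1 O by [].
have inB y : ball y1 d y -> B n y.
  move=> /bO Oy; apply: contrapT => nBy; apply: nFO; by exists y.
have dd0 : 0 < d / 2 by rewrite divr_gt0.
exists ((d / 2)^-1 * (n%:R + n%:R)).
  rewrite mulr_ge0 //; first by rewrite invr_ge0 ltW.
  by rewrite addr_ge0.
move=> z z1 e e0.
set dd := d / 2.
have h1 : ball y1 d (y1 + dd *: z).
  rewrite -ball_normE /= opprD addrA subrr add0r normrN normrZ gtr0_norm //.
  rewrite (@le_lt_trans _ _ dd) //; first by rewrite ler_piMr // ltW.
  by rewrite /dd ltr_pdivrMr // ltr_pMr // ltr1n.
have h0 : ball y1 d y1 by exact: ballxx.
have e'0 : 0 < e * dd / 2 by rewrite !divr_gt0 // mulr_gt0.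
have [_ [x1 x1n <-] ap1] := closure_approx (inB _ h1) e'0.
have [_ [x2 x2n <-] ap2] := closure_approx (inB _ h0) e'0.
exists (dd^-1 *: (x1 - x2)).
  have ddi : 0 <= dd^-1 by rewrite invr_ge0 ltW.
  rewrite normrZ ger0_norm //; apply: ler_wpM2l => //.
  by rewrite (le_trans (ler_normB _ _)) // lerD.
have -> : T (dd^-1 *: (x1 - x2)) - z =
    dd^-1 *: ((T x1 - (y1 + dd *: z)) - (T x2 - y1)).
  rewrite linearZ linearB /= !scalerBr scalerDr scalerA mulVf ?lt0r_neq0 // scale1r.
  exact: zmod_id.
rewrite normrZ ger0_norm ?invr_ge0 ?ltW //.
rewrite (le_lt_trans (ler_wpM2l _ (ler_normB _ _))) ?invr_ge0 ?ltW //.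
have -> : e = dd^-1 * (e * dd / 2 + e * dd / 2).
  by rewrite -splitr mulrC mulfK // lt0r_neq0.
by rewrite ltr_pM2l ?invr_gt0 // ltrD.
Qed.

Arguments surj_AO {R X Y T}.
Arguments AO_surj {R X Y T c}.

Lemma AO_mono (R : realType) (X Y : normedModType R) (T : X -> Y) (c c' : R) :
  c <= c' -> AO T c -> AO T c'.
Proof.
move=> cc' H y y1 e e0; have [x xc Tx] := H y y1 e e0.
by exists x => //; exact: le_trans cc'.
Qed.

Lemma lin_bound (R : realType) (X Y : normedModType R) (T : {linear X -> Y}) :
  continuous T -> exists2 K, 0 < K & forall x, `|T x| <= K * `|x|.
Proof.
move=> Tc; have := proj2 (linear_bounded_continuous T) Tc.
by move=> /linear_boundedP /pinfty_ex_gt0 [K K0 HK]; exists K.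
Qed.
Arguments lin_bound {R X Y T}.

Lemma transfer (R : realType) (X Y Xh Yh : completeNormedModType R)
  (T : {linear X -> Y}) (Th : {linear Xh -> Yh}) :
  continuous T -> continuous Th ->
  (forall phi, sentence phi -> fadm T phi -> fadm Th phi ->
     Defs.sval T phi = Defs.sval Th phi) ->
  (forall y, exists x, T x = y) -> forall y, exists x, Th x = y.
Proof.
move=> Tc Thc EE Ts.
have [c c0 Hc] := surj_AO Ts.
pose N := (Num.truncn c).+1.
have HN : AO T (ratr (N%:R : rat)).
  rewrite ratr_nat; apply: AO_mono Hc; exact/ltW/truncnS_gt.
have [K K0 HK] := lin_bound Tc.
have [Kh Kh0 HKh] := lin_bound Thc.
pose M := (Num.truncn ((K + Kh) * N%:R)).+2.
pose s : rat := M%:R.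
have rs : ratr s = M%:R :> R by rewrite ratr_nat.
have KNM : (K + Kh) * N%:R < M%:R :> R.
  apply: lt_trans (truncnS_gt _) _; by rewrite ltr_nat.
have okgen (Z W : normedModType R) (S : Z -> W) (k : R) :
   0 < k -> k <= K + Kh -> (forall x, `|S x| <= k * `|x|) -> Tsym_ok S (N%:R) s.
  move=> k0 kK HS x; rewrite ratr_nat rs => xN.
  apply: (le_trans (HS x)); apply: ltW; apply: le_lt_trans KNM.
  by apply: ler_pM => //; exact: ltW.
have okT : Tsym_ok T (N%:R) s.
  by apply: (okgen _ _ _ K) => //; rewrite lerDl ltW.
have okTh : Tsym_ok Th (N%:R) s.
  by apply: (okgen _ _ _ Kh) => //; rewrite lerDr ltW.
have s0 : 0 < 2 * ratr s :> R by rewrite rs mulr_gt0 // ltr0n.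
have sent : sentence (phiS (N%:R) s).
  by apply: phiS_sentence; rewrite ?ler0n // /s ltr1n.
have key (Z W : normedModType R) (S : {linear Z -> W}) :
    Defs.sval S (phiS (N%:R) s) = 0 <-> AO S (ratr (N%:R : rat)).
  rewrite phiS_val.
  rewrite (@supinf0 R Z W (ball_of (N%:R)) (ball_of 1)
     (fun x y => `|S x - y| / (2 * ratr s)) 0 0 (1 / (2 * ratr s))).
  - have r1 : ratr 1 = 1 :> R by rewrite rmorph1.
    split.
    + move=> H y y1 e e0.
      have y1' : ball_of 1 y by rewrite /ball_of /= r1.
      have e'0 : 0 < e / (2 * ratr s) by rewrite divr_gt0.
      have [x Hx Sx] := H y y1' _ e'0.
      exists x => //.
      by move: Sx; rewrite ltr_pM2r ?invr_gt0.
    + move=> H y y1 e e0.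
      have y1' : `|y| <= 1 by move: y1; rewrite /ball_of /= r1.
      have e'0 : 0 < e * (2 * ratr s) by rewrite mulr_gt0.
      have [x Hx Sx] := H y y1' _ e'0.
      exists x => //.
      by rewrite ltr_pdivrMr.
  - by rewrite /ball_of /= normr0 ratr_nat ler0n.
  - by rewrite /ball_of /= normr0 rmorph1.
  - by move=> x y; rewrite divr_ge0 // ltW.
  - move=> y; rewrite /ball_of /= rmorph1 linear0 sub0r normrN => y1.
    by rewrite ler_pM2r ?invr_gt0.
have HTh : AO Th (ratr (N%:R : rat)).
  apply/key; rewrite -EE //; first by apply/key.
by apply: AO_surj HTh => //; rewrite ratr_nat ler0n.
Qed.

Theorem proposition5p1 (R : realType) (X Y Xh Yh : completeNormedModType R)
  (T : {linear X -> Y}) (Th : {linear Xh -> Yh}) :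
  continuous T -> continuous Th ->
  elem_equiv T Th ->
  ((forall y : Y, exists x : X, T x = y) <-> (forall y : Yh, exists x : Xh, Th x = y)).
Proof.
move=> Tc Thc EE; split; first exact: transfer.
apply: transfer => // phi ph a1 a2; symmetry; exact: EE.
Qed.
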